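(* Let $\Theta\subseteq\mathbb{R}^d$ be closed and convex. Suppose the loss $\ell$ is $\gamma$-strongly convex in $\theta$ and $\beta$-smooth in $z$, that the distribution map $\mathcal{D}(\cdot)$ is $\epsilon$-sensitive, that $\ell(z;\theta)$ is convex in $z$ for every $\theta$, and that $\mathcal{D}(\alpha\theta+(1-\alpha)\theta')\leq_{cx}\alpha\mathcal{D}(\theta)+(1-\alpha)\mathcal{D}(\theta')$ for all $\theta,\theta'\in\Theta$ and $\alpha\in(0,1)$. Then the performative risk $\mathrm{PR}(\theta)$ is $(\gamma-2\epsilon\beta)$-convex.
   Context: A distribution map assigns to each $\theta\in\Theta$ a distribution $\mathcal{D}(\theta)$ over $\mathbb{R}^m$; $\mathrm{PR}(\theta)=\mathbb{E}_{z\sim\mathcal{D}(\theta)}\ell(z;\theta)$; $\mathrm{PR}$ is $\lambda$-convex if $\mathrm{PR}(\theta)-\frac{\lambda}{2}\|\theta\|_2^2$ is convex. For distributions $\mathcal{D}_1,\mathcal{D}_2$ on $\mathbb{R}^m$, $\mathcal{D}_1\leq_{cx}\mathcal{D}_2$ means $\mathbb{E}_{z\sim\mathcal{D}_1}g(z)\leq\mathbb{E}_{z\sim\mathcal{D}_2}g(z)$ for all convex $g:\mathbb{R}^m\to\mathbb{R}$; $\alpha\mathcal{D}(\theta)+(1-\alpha)\mathcal{D}(\theta')$ is the mixture. Let $\mathcal{Z}=\bigcup_{\theta\in\Theta}\mathrm{supp}(\mathcal{D}(\theta))$. ($\epsilon$-sensitive) $W_1(\mathcal{D}(\theta),\mathcal{D}(\theta'))\leq\epsilon\|\theta-\theta'\|_2$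 for all $\theta,\theta'\in\Theta$; ($\beta$-smooth in $z$) $\|\nabla_\theta\ell(z;\theta)-\nabla_\theta\ell(z';\theta)\|_2\leq\beta\|z-z'\|_2$ for all $\theta\in\Theta$, $z,z'\in\mathcal{Z}$; ($\gamma$-strongly convex in $\theta$) for all $\theta,\theta',\theta_0\in\Theta$, $\mathbb{E}_{z\sim\mathcal{D}(\theta_0)}\ell(z;\theta)\geq \mathbb{E}_{z\sim\mathcal{D}(\theta_0)}\ell(z;\theta')+\mathbb{E}_{z\sim\mathcal{D}(\theta_0)}\nabla_\theta\ell(z;\theta')^\top(\theta-\theta')+\frac{\gamma}{2}\|\theta-\theta'\|_2^2$. *)

(* Defs.v *)
From HB Require Import structures.
From mathcomp Require Import all_boot all_order all_algebra.
From mathcomp Require Import all_classical all_reals all_analysis.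

Set Implicit Arguments.
Unset Strict Implicit.
Unset Printing Implicit Defensive.

Import Order.TTheory GRing.Theory Num.Theory.
Import numFieldNormedType.Exports.

Local Open Scope classical_set_scope.
Local Open Scope ring_scope.

(** It is equipped
    with its Borel sigma-algebra (sigma-algebra generated by its open sets;
    the matrix topology is the usual Euclidean topology of R^m). *)
HB.instance Definition _ (R : realType) (m : nat) :=
  Measurable.copy 'rV[R]_m (g_sigma_algebraType (@open 'rV[R]_m)).

Definition dotv (R : realType) (n : nat) (u v : 'rV[R]_n) : R :=
  \sum_(i < n) u ord0 i * v ord0 i.

Definition norm2 (R : realType) (n : nat) (u : 'rV[R]_n) : R :=
  Num.sqrt (dotv u u).

Definition convex_setv (R : realType) (n : nat) (A : set 'rV[R]_n) : Prop :=
  forall x y (a : R), A x -> A y -> 0 <= a -> a <= 1 ->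
    A (a *: x + (1 - a) *: y).

Definition convex_on (R : realType) (n : nat) (A : set 'rV[R]_n)
    (f : 'rV[R]_n -> R) : Prop :=
  forall x y (a : R), A x -> A y -> 0 <= a -> a <= 1 ->
    f (a *: x + (1 - a) *: y) <= a * f x + (1 - a) * f y.

Definition lambda_convex_on (R : realType) (n : nat) (lambda : R)
    (A : set 'rV[R]_n) (f : 'rV[R]_n -> R) : Prop :=
  convex_on A (fun x => f x - lambda / 2 * norm2 x ^+ 2).

Definition grad (R : realType) (n : nat) (f : 'rV[R]_n -> R) (x : 'rV[R]_n)
  : 'rV[R]_n := \row_(i < n) 'D_(delta_mx ord0 i) f x.

Definition Ex (R : realType) (m : nat) (P : probability 'rV[R]_m R)
    (f : 'rV[R]_m -> R) : R :=
  fine (\int[P]_z (f z)%:E).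

Definition supp (R : realType) (m : nat) (P : probability 'rV[R]_m R)
  : set 'rV[R]_m :=
  [set z | forall U : set 'rV[R]_m, open U -> U z -> (0 < P U)%E].

Definition coupling (R : realType) (m : nat) (P Q : probability 'rV[R]_m R)
    (pi : probability ('rV[R]_m * 'rV[R]_m)%type R) : Prop :=
  (forall A, measurable A -> pi (A `*` setT) = P A) /\
  (forall B, measurable B -> pi (setT `*` B) = Q B).

Definition W1 (R : realType) (m : nat) (P Q : probability 'rV[R]_m R)
  : \bar R :=
  ereal_inf [set (\int[pi]_p (norm2 (p.1 - p.2))%:E)%E
            | pi in [set pi | coupling P Q pi]].

(** Mixture a P + (1 - a) Q of two distributions (weights clamped at 0,
    which is irrelevant for a in [0,1]). *)
Lemma max0_ge0 (R : realType) (a : R) : 0 <= Num.max 0 a.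
Proof. by rewrite le_max lexx. Qed.

Definition nnclamp (R : realType) (a : R) : {nonneg R} :=
  NngNum (max0_ge0 a).

Definition mixture (R : realType) (m : nat) (a : R)
    (P Q : probability 'rV[R]_m R) : {measure set 'rV[R]_m -> \bar R} :=
  measure_add (mscale (nnclamp a) P) (mscale (nnclamp (1 - a)) Q).

Definition cx_le (R : realType) (m : nat) (mu nu : {measure set 'rV[R]_m -> \bar R}) : Prop :=
  forall g : 'rV[R]_m -> R, convex_on setT g ->
    mu.-integrable setT (EFin \o g) -> nu.-integrable setT (EFin \o g) ->
    (\int[mu]_z (g z)%:E <= \int[nu]_z (g z)%:E)%E.

(* Main.v *)
Require Import Defs.
From HB Require Import structures.
From mathcomp Require Import all_boot all_order all_algebra.
From mathcomp Require Import all_classical all_reals all_analysis.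
From mathcomp Require Import ring lra.
From mathcomp Require Import measurable_realfun.
Import Order.TTheory GRing.Theory Num.Theory.
Import numFieldNormedType.Exports.
Local Open Scope classical_set_scope.
Local Open Scope ring_scope.
Section Alg.
Variables (R : realType) (n : nat).
Implicit Types (u v w : 'rV[R]_n).

Lemma dotvC u v : dotv u v = dotv v u.
Proof. by rewrite /dotv; apply: eq_bigr => i _; rewrite mulrC. Qed.

Lemma dotvDl u v w : dotv (u + v) w = dotv u w + dotv v w.
Proof. by rewrite /dotv -big_split; apply: eq_bigr => i _; rewrite mxE mulrDl. Qed.

Lemma dotvZl k u w : dotv (k *: u) w = k * dotv u w.
Proof. by rewrite /dotv mulr_sumr; apply: eq_bigr => i _; rewrite mxE mulrA. Qed.

Lemma dotvNl u w : dotv (- u) w = - dotv u w.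
Proof. by rewrite -scaleN1r dotvZl mulN1r. Qed.

Lemma dotvBl u v w : dotv (u - v) w = dotv u w - dotv v w.
Proof. by rewrite dotvDl dotvNl. Qed.

Lemma dotvDr u v w : dotv w (u + v) = dotv w u + dotv w v.
Proof. by rewrite dotvC dotvDl !(dotvC w). Qed.
Lemma dotvZr k u w : dotv w (k *: u) = k * dotv w u.
Proof. by rewrite dotvC dotvZl dotvC. Qed.
Lemma dotvBr u v w : dotv w (u - v) = dotv w u - dotv w v.
Proof. by rewrite dotvC dotvBl !(dotvC w). Qed.

Lemma dotv_ge0 u : 0 <= dotv u u.
Proof. by rewrite /dotv; apply: sumr_ge0 => i _; rewrite -expr2 sqr_ge0. Qed.

Lemma norm2_ge0 u : 0 <= norm2 u.
Proof. exact: sqrtr_ge0. Qed.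

Lemma norm2_sq u : norm2 u ^+ 2 = dotv u u.
Proof. by rewrite /norm2 sqr_sqrtr // dotv_ge0. Qed.

Lemma dotv0 u : dotv u u = 0 -> u = 0.
Proof.
move=> /eqP; rewrite /dotv psumr_eq0; last by move=> i _; rewrite -expr2 sqr_ge0.
move=> /allP H; apply/rowP => i; rewrite mxE.
have := H i (mem_index_enum i); rewrite mulf_eq0 orbb => /eqP //.
Qed.

Lemma cauchy_schwarz u w : dotv u w <= norm2 u * norm2 w.
Proof.
have [B0|Bn0] := eqVneq (dotv w w) 0.
  have -> := @dotv0 w B0.
  have -> : dotv u 0 = 0 by rewrite /dotv big1 // => i _; rewrite mxE mulr0.
  by rewrite mulr_ge0 // norm2_ge0.
have Bp : 0 < dotv w w by rewrite lt_neqAle eq_sym Bn0 dotv_ge0.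
set t := dotv u w / dotv w w.
have H := dotv_ge0 (u - t *: w).
rewrite dotvBl !dotvBr !dotvZl !dotvZr (dotvC w u) in H.
have H2 : (dotv u w) ^+ 2 <= dotv u u * dotv w w.
  rewrite /t in H.
  move: H Bn0; set A := dotv u u; set C := dotv u w; set B := dotv w w => H Bn0.
  have E : A - C / B * C - (C / B * C - C / B * (C / B * B)) = (A * B - C ^+ 2) / B.
    by field.
  rewrite E in H; rewrite -subr_ge0.
  have -> : A * B - C ^+ 2 = (A * B - C ^+ 2) / B * B by field.
  by rewrite mulr_ge0 // ltW.
have [C0|C0] := lerP (dotv u w) 0.
  by rewrite (le_trans C0) // mulr_ge0 // norm2_ge0.
rewrite /norm2 -sqrtrM ?dotv_ge0 //.
rewrite -(ger0_norm (ltW C0)) -sqrtr_sqr.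
by rewrite ler_sqrt // mulr_ge0 // dotv_ge0.
Qed.
End Alg.
Section Supp.
Variables (R : realType) (m : nat).
Local Notation T := 'rV[R]_m.

Lemma open_meas (U : set T) : open U -> measurable U.
Proof. move=> oU. exact: sub_sigma_algebra. Qed.

Lemma rball (z : T) (e : R) : 0 < e ->
  exists (q : 'rV[rat]_m) (r : rat), 0 < @ratr R r /\ @ratr R r + @ratr R r <= e /\
    ball (map_mx (@ratr R) q) (@ratr R r) z.
Proof.
move=> e0.
have [r] := @rat_in_itvoo R 0 (e / 2) ltac:(by rewrite divr_gt0).
rewrite in_itv /= => /andP[r0 re].
have H : forall j : 'I_m, exists q : rat, ratr q \in `](z ord0 j - ratr r), (z ord0 j + ratr r)[.
  move=> j; apply: rat_in_itvoo; rewrite ltrBlDr -addrA ltrDl.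
  by rewrite addr_gt0.
have [f Hf] := choice H.
exists (\row_j f j), r; split => //; split.
  by move: re; set rr := ratr r; lra.
split => // i j; rewrite ord1 /ball /= !mxE.
move: (Hf j); rewrite in_itv /= => /andP[h1 h2].
rewrite ltr_norml; apply/andP; split; move: h1 h2; 
  set a := ratr (f j); set b := ratr r; set c := z _ j; lra.
Qed.

Lemma supp_negligible (P : probability T R) : P.-negligible (~` supp P).
Proof.
pose F (n : nat) : set T := [set x | exists q r, unpickle n = Some (q, r) /\
   P (ball (map_mx (@ratr R) q) (@ratr R r)) = 0%E /\ ball (map_mx (@ratr R) q) (@ratr R r) x].
apply: (@negligibleS _ _ _ _ (\bigcup_n F n)); last first.
  apply: negligible_bigcup => n.
  have [[q [r [hu h0]]]|hn] := pselect (exists q r, unpickle n = Some (q, r) /\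
        P (ball (map_mx (@ratr R) q) (@ratr R r)) = 0%E).
    exists (ball (map_mx (@ratr R) q) (@ratr R r)); split => //.
      by apply: open_meas; exact: ball_open.
    move=> x [q' [r' [hu' [_ hb]]]]; move: hu' hb; rewrite hu => -[-> ->] //.
  exists set0; split => // x [q [r [hu [h0 _]]]]; apply: hn; exists q, r; by [].
move=> z /= nz.
have [U [oU Uz PU]] : exists U : set T, [/\ open U, U z & P U = 0%E].
  apply: contra_notP nz => H U oU Uz; rewrite lt0e measure_ge0 andbT.
  by apply/eqP => PU0; apply: H; exists U.
have := open_nbhs_nbhs (conj oU Uz) => /nbhs_ballP [e e0 bU].
have [q [r [r0 [re bz]]]] := @rball z e e0.
exists (pickle (q, r)) => //; exists q, r; split; first by rewrite pickleK.
split => //.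
apply/eqP; rewrite -measure_le0 -PU le_measure ?inE //.
- by apply: open_meas; exact: ball_open.
- exact: open_meas.
move=> y by_; apply: bU; apply: (le_ball re).
exact: ball_triangle (ball_sym bz) by_.
Qed.
End Supp.
Section Meas.
Variables (R : realType) (m : nat).
Local Notation T := 'rV[R]_m.

Lemma open_meas' (U : set T) : open U -> measurable U.
Proof. move=> oU. exact: sub_sigma_algebra. Qed.

Lemma coord_meas (i : 'I_m) : measurable_fun setT (fun x : T => x ord0 i).
Proof.
apply: (@measurability _ _ T R setT (fun x : T => x ord0 i) _ (measurable_realfun.RGenOpens.measurableE R)).
move=> _ [_ [a [b ->] <-]]; rewrite setTI.
apply: open_meas'.
have /continuousP := @coord_continuous R 1 m ord0 i.
by apply; exact: interval_open.
Qed.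

Lemma N_meas : measurable_fun setT (fun p : T * T => norm2 (p.1 - p.2)).
Proof.
rewrite /norm2 /dotv.
apply: measurableT_comp; first exact: continuous_measurable_fun (@sqrt_continuous R).
apply: measurable_sum => j.
have E : (fun p : T * T => (p.1 - p.2) ord0 j * (p.1 - p.2) ord0 j) =
   (fun p => (p.1 ord0 j - p.2 ord0 j) * (p.1 ord0 j - p.2 ord0 j)).
  by apply/funext => p; rewrite !mxE.
rewrite E; apply: measurable_funM; apply: measurable_funB;
  apply: measurableT_comp (coord_meas j) _; 
  [exact: measurable_fst|exact: measurable_snd|exact: measurable_fst|exact: measurable_snd].
Qed.

Lemma marg (pi : {measure set (T * T) -> \bar R}) (P : {measure set T -> \bar R})
  (phi : T * T -> T) (mphi : measurable_fun setT phi)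
  (H : forall A, measurable A -> pi (phi @^-1` A) = P A) (g : T -> R) :
  P.-integrable setT (fun z => (g z)%:E) ->
  pi.-integrable setT (fun p => (g (phi p))%:E) /\ (\int[pi]_p (g (phi p))%:E = \int[P]_z (g z)%:E)%E.
Proof.
move=> ig.
have mg := measurable_int P ig.
have ePQ : forall f : T -> \bar R, (\int[P]_z f z = \int[pushforward pi phi]_z f z)%E.
  move=> f; apply: eq_measure_integral => A mA _; by rewrite -H.
have ip : pi.-integrable setT (fun p => (g (phi p))%:E).
  apply/integrableP; split.
    apply/measurable_EFinP; apply: measurableT_comp mphi; exact/measurable_EFinP.
  have := ig => /integrableP [_]; rewrite ePQ.
  rewrite ge0_integral_pushforward //.
  have mgr : measurable_fun setT g by apply/measurable_EFinP.
  rewrite (_ : (fun y => `|(g y)%:E|%E) = EFin \o (fun y => `|g y|%R)); last by apply/funext.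
  apply/measurable_EFinP; apply: measurableT_comp mgr; exact: normr_measurable.
split => //.
rewrite ePQ (integral_pushforward mphi) //.
Qed.
End Meas.
Section Coup.
Variables (R : realType) (m : nat).
Local Notation T := 'rV[R]_m.

Lemma neg_fst (pi : probability (T * T)%type R) (P : probability T R) :
  (forall A, measurable A -> pi (A `*` setT) = P A) ->
  pi.-negligible ((~` supp P) `*` setT).
Proof.
move=> H; have [A [mA PA sA]] := @supp_negligible R m P.
exists (A `*` setT); split.
- exact: measurableX.
- by rewrite H.
- by move=> x [/sA h _].
Qed.

Lemma neg_snd (pi : probability (T * T)%type R) (P : probability T R) :
  (forall A, measurable A -> pi (setT `*` A) = P A) ->
  pi.-negligible (setT `*` (~` supp P)).
Proof.
move=> H; have [A [mA PA sA]] := @supp_negligible R m P.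
exists (setT `*` A); split.
- exact: measurableX.
- by rewrite H.
- by move=> x [_ /sA h].
Qed.

Lemma int_le (pi : probability (T * T)%type R) (P Q : probability T R) (g : T -> R) (c : R) :
  coupling P Q pi -> 0 <= c ->
  P.-integrable setT (fun z => (g z)%:E) -> Q.-integrable setT (fun z => (g z)%:E) ->
  (forall z z', supp P z -> supp Q z' -> g z - g z' <= c * norm2 (z - z')) ->
  (\int[pi]_p ((g p.1)%:E - (g p.2)%:E) <= c%:E * \int[pi]_p (norm2 (p.1 - p.2))%:E)%E.
Proof.
move=> [H1 H2] c0 iP iQ Hl.
have hf : forall A, measurable A -> pi (fst @^-1` A) = P A.
  move=> A mA; rewrite -H1 //; congr (pi _); apply/seteqP; split=> x //= [] //.
have hs : forall A, measurable A -> pi (snd @^-1` A) = Q A.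
  move=> A mA; rewrite -H2 //; congr (pi _); apply/seteqP; split=> x //= [] //.
have [ip1 _] := @marg R m pi P fst measurable_fst hf g iP.
have [ip2 _] := @marg R m pi Q snd measurable_snd hs g iQ.
have mN := @N_meas R m.
have mG : measurable_fun setT (fun p : T * T => ((g p.1)%:E - (g p.2)%:E)%E).
  apply: emeasurable_funB; [exact: measurable_int ip1|exact: measurable_int ip2].
rewrite integralE.
rewrite -ge0_integralZl_EFin //; last 2 first.
- by move=> x _; rewrite lee_fin norm2_ge0.
- exact/measurable_EFinP.
rewrite -[X in (_ <= X)%E]sube0.
apply: leeB; last exact: integral_ge0.
apply: ae_ge0_le_integral => //.
- exact: measurable_funepos.
- by move=> x _; rewrite -EFinM lee_fin mulr_ge0 // norm2_ge0.
- apply: emeasurable_funM; [exact: measurable_cst|exact/measurable_EFinP].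
have Hn := negligibleU (@neg_fst pi P H1) (@neg_snd pi Q H2).
rewrite /prop_near1 /almost_everywhere /=.
apply: (negligibleS _ Hn).
move=> x /= nx.
have [h1|h1] := pselect (supp P x.1); last by left.
have [h2|h2] := pselect (supp Q x.2); last by right.
exfalso; apply: nx => _.
rewrite funeposE -EFinM -EFinB -EFin_max lee_fin ge_max Hl //=.
by rewrite mulr_ge0 // norm2_ge0.
Qed.

Lemma coupling_bound (P Q : probability T R) (g : T -> R) (c w : R) :
  0 <= c ->
  P.-integrable setT (fun z => (g z)%:E) -> Q.-integrable setT (fun z => (g z)%:E) ->
  (forall z z', supp P z -> supp Q z' -> g z - g z' <= c * norm2 (z - z')) ->
  (W1 P Q <= w%:E)%E -> Ex P g - Ex Q g <= c * w.
Proof.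
move=> c0 iP iQ Hl HW.
apply/ler_addgt0Pr => e e0.
have c1 : 0 < c + 1 by rewrite ltr_wpDl.
pose e' := e / (c + 1).
have e'0 : 0 < e' by rewrite divr_gt0.
have : (W1 P Q < (w + e')%:E)%E by apply: le_lt_trans HW _; rewrite lte_fin ltrDl.
move=> /ereal_inf_lt [y [pi cpi <-]] hy.
have Hle := @int_le pi P Q g c cpi c0 iP iQ Hl.
case: cpi => H1 H2.
have hf : forall A, measurable A -> pi (fst @^-1` A) = P A.
  move=> A mA; rewrite -H1 //; congr (pi _); apply/seteqP; split=> x //= [] //.
have hs : forall A, measurable A -> pi (snd @^-1` A) = Q A.
  move=> A mA; rewrite -H2 //; congr (pi _); apply/seteqP; split=> x //= [] //.
have [ip1 e1] := @marg R m pi P fst measurable_fst hf g iP.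
have [ip2 e2] := @marg R m pi Q snd measurable_snd hs g iQ.
rewrite (integralB_EFin _ ip1 ip2) //= e1 e2 in Hle.
have fP := integrable_fin_num measurableT iP.
have fQ := integrable_fin_num measurableT iQ.
have N0 : (0 <= \int[pi]_p (norm2 (p.1 - p.2))%:E)%E.
  by apply: integral_ge0 => x _; rewrite lee_fin norm2_ge0.
have fN : (\int[pi]_p (norm2 (p.1 - p.2))%:E)%E \is a fin_num.
  by rewrite ge0_fin_numE // (lt_trans hy) // ltey.
rewrite /Ex.
move: Hle hy; rewrite -(fineK fP) -(fineK fQ) -(fineK fN) -EFinB -EFinM !lte_fin lee_fin.
set a := fine _; set b := fine _; set n := fine _ => Hle hy.
apply: (le_trans Hle).
have ce : c * e' <= e.
  rewrite /e' mulrA ler_pdivrMr //. nra.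
apply: (le_trans (ler_wpM2l c0 (ltW hy))).
by rewrite mulrDr lerD2l.
Qed.
End Coup.
Section Mix.
Variables (R : realType) (m : nat).
Local Notation T := 'rV[R]_m.

Lemma mscale_int (k : {nonneg R}) (mu : {measure set T -> \bar R}) (g : T -> R) :
  mu.-integrable setT (fun z => (g z)%:E) ->
  (mscale k mu).-integrable setT (fun z => (g z)%:E) /\
  (\int[mscale k mu]_z (g z)%:E = (k%:num)%:E * \int[mu]_z (g z)%:E)%E.
Proof.
move=> ig.
have mg := measurable_int mu ig.
have mga : measurable_fun setT (fun z => `|(g z)%:E|%E).
  have mgr : measurable_fun setT g by apply/measurable_EFinP.
  rewrite (_ : (fun y => `|(g y)%:E|%E) = EFin \o (fun y => `|g y|%R)); last by apply/funext.
  apply/measurable_EFinP; apply: measurableT_comp mgr; exact: normr_measurable.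
split.
  apply/integrableP; split => //.
  rewrite ge0_integral_mscale //.
  have /integrableP [_ h] := ig.
  by apply: lte_mul_pinfty => //; rewrite lee_fin.
have ip := integrable_funepos measurableT ig.
have in_ := integrable_funeneg measurableT ig.
rewrite [LHS]integralE [in RHS]integralE.
rewrite (ge0_integral_mscale mu measurableT k (measurable_funepos mg) (fun x _ => funepos_ge0 _ x)).
rewrite (ge0_integral_mscale mu measurableT k (measurable_funeneg mg) (fun x _ => funeneg_ge0 _ x)).
rewrite [RHS]muleBr; first reflexivity.
  by [].
apply: fin_num_adde_defl; rewrite fin_numN; exact: integrable_fin_num in_.
Qed.

Lemma nnclampE (a : R) : 0 <= a -> (nnclamp a)%:num = a.
Proof. by move=> a0; rewrite /= max_r. Qed.

Lemma mix_int (a : R) (P Q : probability T R) (g : T -> R) : 0 <= a -> a <= 1 ->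
  P.-integrable setT (fun z => (g z)%:E) -> Q.-integrable setT (fun z => (g z)%:E) ->
  (mixture a P Q).-integrable setT (fun z => (g z)%:E) /\ (\int[mixture a P Q]_z (g z)%:E = a%:E * \int[P]_z (g z)%:E + (1 - a)%:E * \int[Q]_z (g z)%:E)%E.
Proof.
move=> a0 a1 iP iQ.
have [i1 e1] := @mscale_int (nnclamp a) P g iP.
have [i2 e2] := @mscale_int (nnclamp (1 - a)) Q g iQ.
split.
  apply/integrableP; split; first exact: measurable_int i1.
  rewrite /mixture ge0_integral_measure_add //.
  - case/integrableP: (i1) => _ h1; case/integrableP: (i2) => _ h2.
    exact: lte_add_pinfty.
  - have mgr : measurable_fun setT g by apply/measurable_EFinP; exact: measurable_int iP.
    rewrite (_ : (fun y => `|(g y)%:E|%E) = EFin \o (fun y => `|g y|%R)); last by apply/funext.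
    apply/measurable_EFinP; apply: measurableT_comp mgr; exact: normr_measurable.
rewrite /mixture integral_measure_add // e1 e2 !nnclampE //.
by rewrite subr_ge0.
Qed.
End Mix.
Section ExL.
Variables (R : realType) (m d : nat).
Local Notation T := 'rV[R]_m.

Lemma Ex_E (P : probability T R) (f : T -> R) :
  P.-integrable setT (fun z => (f z)%:E) -> (Ex P f)%:E = (\int[P]_z (f z)%:E)%E.
Proof. by move=> i; rewrite /Ex fineK // (integrable_fin_num measurableT i). Qed.

Lemma intZ (P : probability T R) (f : T -> R) (k : R) :
  P.-integrable setT (fun z => (f z)%:E) -> P.-integrable setT (fun z => (k * f z)%:E).
Proof.
move=> i; rewrite (_ : (fun z => (k * f z)%:E) = (fun z => k%:E * (f z)%:E)%E).
  exact: integrableZl.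
by apply/funext => z; rewrite EFinM.
Qed.

Lemma Ex_scale (P : probability T R) (f : T -> R) (k : R) :
  P.-integrable setT (fun z => (f z)%:E) -> Ex P (fun z => k * f z) = k * Ex P f.
Proof.
move=> i; apply/EFin_inj; rewrite Ex_E; last exact: intZ.
rewrite EFinM Ex_E // -integralZl //; apply: eq_integral => z _; by rewrite EFinM.
Qed.

Lemma int_dot (P : probability T R) (h : T -> 'rV[R]_d) (u : 'rV[R]_d) :
  (forall i, P.-integrable setT (fun z => (h z ord0 i)%:E)) ->
  P.-integrable setT (fun z => (dotv (h z) u)%:E).
Proof.
move=> H; rewrite /dotv.
rewrite (_ : (fun z => (\sum_(i < d) h z ord0 i * u ord0 i)%:E) =
   (fun z => \sum_(i < d) ((u ord0 i)%:E * (h z ord0 i)%:E))%E); last first.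
  by apply/funext => z; rewrite -sumEFin; apply: eq_bigr => i _; rewrite -EFinM mulrC.
apply: integrable_sum => // i _; exact: integrableZl.
Qed.
End ExL.
Theorem corollaryA1 (R : realType) (d m : nat)
    (Theta : set 'rV[R]_d)
    (D : 'rV[R]_d -> probability 'rV[R]_m R)
    (l : 'rV[R]_m -> 'rV[R]_d -> R)
    (gamma beta eps : R) :
  (* Theta closed and convex *)
  closed Theta -> convex_setv Theta ->
  (* constants *)
  0 < gamma -> 0 <= beta -> 0 <= eps ->
  (* standing regularity: l(z; .) differentiable on Theta; the expectations
     appearing below exist *)
  (forall z theta, Theta theta -> differentiable (l z) theta) ->
  (forall theta theta0, Theta theta -> Theta theta0 ->
     (D theta0).-integrable setT (fun z => (l z theta)%:E)) ->
  (forall theta theta0 (i : 'I_d), Theta theta -> Theta theta0 ->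
     (D theta0).-integrable setT (fun z => (grad (l z) theta ord0 i)%:E)) ->
  (* gamma-strongly convex in theta *)
  (forall theta theta' theta0, Theta theta -> Theta theta' -> Theta theta0 ->
     Ex (D theta0) (fun z => l z theta) >=
       Ex (D theta0) (fun z => l z theta')
       + Ex (D theta0) (fun z => dotv (grad (l z) theta') (theta - theta'))
       + gamma / 2 * norm2 (theta - theta') ^+ 2) ->
  (* beta-smooth in z *)
  (forall theta z z', Theta theta ->
     (exists t, Theta t /\ supp (D t) z) ->
     (exists t, Theta t /\ supp (D t) z') ->
     norm2 (grad (l z) theta - grad (l z') theta) <= beta * norm2 (z - z')) ->
  (* eps-sensitive *)
  (forall theta theta', Theta theta -> Theta theta' ->
     (W1 (D theta) (D theta') <= (eps * norm2 (theta - theta'))%:E)%E) ->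
  (* l(z; theta) convex in z *)
  (forall theta, Theta theta -> convex_on setT (fun z => l z theta)) ->
  (* mixture dominance *)
  (forall theta theta' (a : R), Theta theta -> Theta theta' -> 0 < a -> a < 1 ->
     cx_le (D (a *: theta + (1 - a) *: theta'))
           (mixture a (D theta) (D theta'))) ->
  lambda_convex_on (gamma - 2 * eps * beta) Theta
    (fun theta => Ex (D theta) (fun z => l z theta)).

Proof.
move=> _ cvx g0 b0 e0 _ intl intg SC Lip W1h lcvx mixh.
move=> x y a Tx Ty a0 a1.
rewrite !norm2_sq.
have [->|an0] := eqVneq a 0.
  by rewrite scale0r add0r subr0 scale1r mul0r add0r mul1r.
have [->|an1] := eqVneq a 1.
  by rewrite scale1r subrr scale0r addr0 mul1r mul0r addr0.
have a0s : 0 < a by rewrite lt_neqAle eq_sym an0 a0.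
have a1s : a < 1 by rewrite lt_neqAle an1 a1.
have Tz := cvx x y a Tx Ty a0 a1.
move: Tz; set b := 1 - a; set z := a *: x + b *: y => Tz.
set v := x - y.
set N := dotv v v.
have ixz := intl z x Tz Tx.
have iyz := intl z y Tz Ty.
have izz := intl z z Tz Tz.
have ixx := intl x x Tx Tx.
have iyy := intl y y Ty Ty.
have K1 : Ex (D z) (fun w => l w z) <=
    a * Ex (D x) (fun w => l w z) + b * Ex (D y) (fun w => l w z).
  have [imix emix] := @mix_int R m a (D x) (D y) (fun w => l w z) a0 a1 (intl z x Tz Tx) (intl z y Tz Ty).
  have := mixh x y a Tx Ty a0s a1s (fun w => l w z) (lcvx z Tz) (intl z z Tz Tz) imix.
  rewrite emix -(@Ex_E R m _ _ ixz) -(@Ex_E R m _ _ iyz) -(@Ex_E R m _ _ izz).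
  by rewrite -!EFinM -EFinD lee_fin.
have igv : forall t u, Theta t -> Theta u ->
    (D u).-integrable setT (fun w => (dotv (grad (l w) t) v)%:E).
  move=> t u Tt Tu; apply: int_dot => i; exact: intg.
set h := fun w => dotv (grad (l w) z) v.
have Hsc : forall t k, Theta t -> Ex (D t) (fun w => dotv (grad (l w) z) (k *: v)) = k * Ex (D t) h.
  move=> t k Tt.
  rewrite (_ : (fun w => dotv (grad (l w) z) (k *: v)) = (fun w => k * h w)); last first.
    by apply/funext => w; rewrite dotvZr.
  exact: Ex_scale (igv z t Tz Tt).
have exz : x - z = b *: v.
  by apply/rowP => i; rewrite /z /v /b !mxE; ring.
have eyz : y - z = (- a) *: v.
  by apply/rowP => i; rewrite /z /v /b !mxE; ring.
have K2 := SC x z x Tx Tz Tx.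
rewrite exz Hsc // norm2_sq dotvZl dotvZr -/N in K2.
have K3 := SC y z y Ty Tz Ty.
rewrite eyz Hsc // norm2_sq dotvZl dotvZr -/N in K3.
have K4 : Ex (D y) h - Ex (D x) h <= (beta * norm2 v) * (eps * norm2 (y - x)).
  apply: coupling_bound.
  - by rewrite mulr_ge0 // norm2_ge0.
  - exact: igv.
  - exact: igv.
  - move=> w1 w2 s1 s2.
    rewrite /h -dotvBl.
    apply: (le_trans (@cauchy_schwarz R d _ _)).
    rewrite mulrAC; apply: ler_wpM2r; first exact: norm2_ge0.
    apply: Lip => //; [by exists y | by exists x].
  - exact: W1h.
have nyx : norm2 (y - x) = norm2 v.
  by rewrite /norm2 -opprB dotvNl dotvC dotvNl opprK.
have nvv : norm2 v * norm2 v = N by rewrite -expr2 norm2_sq.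
have K4' : Ex (D y) h - Ex (D x) h <= eps * beta * N.
  have -> : eps * beta * N = beta * norm2 v * (eps * norm2 (y - x)) by rewrite nyx -nvv; ring.
  exact: K4.
have NI : a * dotv x x + b * dotv y y - dotv z z = a * b * N.
  rewrite /N /v /z !dotvBl !dotvBr !dotvDl !dotvDr !dotvZl !dotvZr (@dotvC R d y x) /b.
  ring.
have b0' : 0 <= b by rewrite /b subr_ge0.
have M2 := ler_wpM2l a0 K2.
have M3 := ler_wpM2l b0' K3.
have M4 := ler_wpM2l (mulr_ge0 a0 b0') K4'.
move: K1 M2 M3 M4 NI; rewrite /b.
set Pz := Ex (D z) _; set Ax := Ex (D x) (l^~ z); set Ay := Ex (D y) (l^~ z).
set Px := Ex (D x) _; set Py := Ex (D y) _; set Hx := Ex (D x) h; set Hy := Ex (D y) h.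
set X := dotv x x; set Y := dotv y y; set Z := dotv z z.
move=> K1 M2 M3 M4 NI.
nra.
Qed.
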